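(* Assume the setting below ($\mathcal{S}$ convex and generating $\Lambda$; conformal data $\mathcal{R}$). Then the moment map $\mu_{\mathcal{R}}$ satisfies the transversality condition at every point of $P=\mu_{\mathcal{R}}^{-1}(0)\setminus\{0\}$: for every $p\in P$ and every nonzero $a\in\mathfrak g$ there exists $a'\in\mathfrak g$ with $(I_1\,d\langle(\mu_{\mathcal R})_1,a'\rangle)_p(\mathbf{A}_p(a))\neq 0$.
   Context: $F$ is a 2-torus, Lie algebra $\mathfrak f\cong\mathbb{R}^2$, lattice $\Lambda\cong\mathbb{Z}^2$. $\mathcal{S}=\{u_1,\dots,u_k\}\subset\Lambda$ is an ordered set generating $\Lambda$, with cyclically consecutive elements linearly independent, each $u_i$ either $(p,0)$ with $p>0$ or with positive second coordinate, $u_1=(p,0)$, and convex (i.e. $u_1,\dots,u_k$ are the outward normals of a convex polygon; equivalently the associated compact toric orbifold has negative-definite intersection form). Set $v_1=u_1+u_k$, $v_i=u_i-u_{i-1}$ ($2\le i\le k$), and $\Omega:\mathbb{R}^k\to\mathfrak f$, $e_i\mapsto v_i$; $\mathfrak g=\ker\Omega$ (dimension $k-2$). Conformal data $\mathcal R$: points $\zeta_1,\dots,\zeta_k$ with $|\zeta_i|=1$, $0=\arg\zeta_1<\dots<\arg\zeta_k<2\pi$; $z_i=\zeta_i^{1/2}$ with $0\le\arg z_i<\pi$, $\boldsymbol z=(z_1,\dots,z_k)$, $\mathbb W=\mathrm{span}\{\mathrm{Re}\boldsymbol z,\mathrm{Im}\boldsymbol z\}\subset(\mathbb{R}^k)^*$,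 and $B^*:(\mathbb{R}^k)^*\to\mathfrak g^*$ a linear map with kernel $\mathbb W$. On $\mathbb{H}^k$ with coordinates $q_m=x_m+y_mj$ ($x_m,y_m\in\mathbb C$) and $I_1,I_2,I_3$ = left multiplication by $i,j,k$, let $\mathcal U=\mathbb{H}^k/\{\pm1\}$ (associated bundle of $\mathbb{HP}^{k-1}$). The torus $T^k$ = (maximal torus $\{(\lambda_1,\dots,\lambda_k):\lambda_m\in U(1)\subset\mathbb C\}$ of $Sp(k)$ acting by right multiplication $q_m\mapsto q_m\lambda_m$) modulo $(-1,\dots,-1)$ acts on $\mathcal U$; its Lie algebra is $\mathbb{R}^k$ with $e_m$ generating the rotation of the $m$-th factor, and $\mathbf A(a)$ denotes the vector field on $\mathcal U$ generated by $a\in\mathfrak g\subset\mathbb{R}^k$. Define $\nu_m:\mathcal U\to\mathrm{Im}\mathbb{H}$, $\nu_m(q)=(|x_m|^2-|y_m|^2,\ \mathrm{Re}(2ix_my_m),\ \mathrm{Im}(2ix_my_m))$, $\nu=(\nu_1,\dots,\nu_k):\mathcal U\to(\mathbb{R}^k)^*\otimes\mathrm{Im}\mathbb H$, and $\mu_{\mathcal R}=B^*\circ\nu:\mathcal U\to\mathfrak g^*\otimes\mathrm{Im}\mathbb{H}$, with components $(\mu_{\mathcal R})_1,(\mu_{\mathcal R})_2,(\mu_{\mathcal R})_3$. $I_1$ acts on 1-forms by the transpose action. *)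

(* Defs.v *)
From HB Require Import structures.
From mathcomp Require Import all_boot all_order all_algebra.
From mathcomp Require Import all_classical all_reals all_analysis.
Set Implicit Arguments. Unset Strict Implicit. Unset Printing Implicit Defensive.
Import Order.TTheory GRing.Theory Num.Theory.
Import numFieldNormedType.Exports.
Local Open Scope ring_scope.

(* ---------- lattice data S = (u_1,...,u_k), indices 0..k-1 ---------- *)
Definition det2 (a b : int * int) : int := a.1 * b.2 - a.2 * b.1.

Definition generates_lattice (k : nat) (u : 'I_k -> int * int) : Prop :=
  forall w : int * int, exists c : 'I_k -> int,
    w.1 = \sum_(i < k) c i * (u i).1 /\ w.2 = \sum_(i < k) c i * (u i).2.

Definition cyc_consec_indep (k : nat) (u : 'I_k -> int * int) : Prop :=
  forall i : 'I_k, det2 (u i) (u (ordS i)) != 0.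

Definition upper_half (k : nat) (u : 'I_k -> int * int) : Prop :=
  forall i : 'I_k, ((u i).2 == 0 /\ 0 < (u i).1) \/ 0 < (u i).2.

Definition first_horizontal (k : nat) (u : 'I_k -> int * int) : Prop :=
  forall i : 'I_k, nat_of_ord i = 0%N -> (u i).2 = 0 /\ 0 < (u i).1.

(* convexity: u_1,...,u_k (followed by -u_1,...,-u_k) are, in this order,
   the outward normals of a convex polygon, i.e. they turn strictly
   counterclockwise *)
Definition convex_seq (k : nat) (u : 'I_k -> int * int) : Prop :=
  forall i j : 'I_k, nat_of_ord j = (nat_of_ord i).+1 -> 0 < det2 (u i) (u j).

Definition vvec (k : nat) (u : 'I_k -> int * int) (i : 'I_k) : int * int :=
  (* ord_pred i is the cyclic predecessor: index k-1 (i.e. u_k) when i = 0 *)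
  if nat_of_ord i == 0%N then
    ((u i).1 + (u (ord_pred i)).1, (u i).2 + (u (ord_pred i)).2)
  else ((u i).1 - (u (ord_pred i)).1, (u i).2 - (u (ord_pred i)).2).

(* g = ker Omega, Omega(e_i) = v_i *)
Definition in_g {R : realType} (k : nat) (u : 'I_k -> int * int)
  (a : 'I_k -> R) : Prop :=
  \sum_(i < k) a i * ((vvec u i).1)%:~R = 0 /\
  \sum_(i < k) a i * ((vvec u i).2)%:~R = 0.

(* zeta_i = exp(i theta_i), 0 = theta_1 < ... < theta_k < 2 pi *)
Definition conformal_angles {R : realType} (k : nat) (theta : 'I_k -> R) : Prop :=
  (forall i : 'I_k, nat_of_ord i = 0%N -> theta i = 0) /\
  (forall i j : 'I_k, (i < j)%N -> theta i < theta j) /\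
  (forall i : 'I_k, 0 <= theta i < 2 * pi).

(* z_i = zeta_i^{1/2} = exp(i theta_i / 2) (arg in [0,pi));
   W = span{Re z, Im z} in (R^k)^*  *)
Definition in_W {R : realType} (k : nat) (theta : 'I_k -> R)
  (xi : 'I_k -> R) : Prop :=
  exists alpha beta : R, forall i : 'I_k,
    xi i = alpha * cos (theta i / 2) + beta * sin (theta i / 2).

(* B^* : (R^k)^* -> g^*, an element of g^* being a linear functional on g,
   represented by its values on elements of g; linear, with kernel W. *)
Definition Bstar_ok {R : realType} (k : nat) (u : 'I_k -> int * int)
  (theta : 'I_k -> R) (Bs : ('I_k -> R) -> ('I_k -> R) -> R) : Prop :=
  (forall xi (c : R) a b, in_g u a -> in_g u b ->
     Bs xi (fun i => c * a i + b i) = c * Bs xi a + Bs xi b) /\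
  (forall xi eta (c : R) a, in_g u a ->
     Bs (fun i => c * xi i + eta i) a = c * Bs xi a + Bs eta a) /\
  (forall xi, (forall a, in_g u a -> Bs xi a = 0) <-> in_W theta xi).

(* quaternion a + b i + c j + d k as (a,b,c,d) *)
Definition quat (R : realType) := (R * R * R * R)%type.

Definition qmul {R : realType} (p q : quat R) : quat R :=
  let: (a1, b1, c1, d1) := p in let: (a2, b2, c2, d2) := q in
  (a1*a2 - b1*b2 - c1*c2 - d1*d2,
   a1*b2 + b1*a2 + c1*d2 - d1*c2,
   a1*c2 - b1*d2 + c1*a2 + d1*b2,
   a1*d2 + b1*c2 - c1*b2 + d1*a2).

(* H^k as k x 4 real matrices: row m = real coordinates of q_m *)
Definition Hk (R : realType) (k : nat) := 'M[R]_(k, 4).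

Definition qrow {R : realType} {k : nat} (p : Hk R k) (m : 'I_k) : quat R :=
  (p m (inord 0), p m (inord 1), p m (inord 2), p m (inord 3)).

Definition qcoord {R : realType} (q : quat R) (c : 'I_4) : R :=
  let: (a, b, c', d) := q in
  if nat_of_ord c == 0%N then a else if nat_of_ord c == 1%N then b
  else if nat_of_ord c == 2%N then c' else d.

Definition mkH {R : realType} {k : nat} (f : 'I_k -> quat R) : Hk R k :=
  \matrix_(m < k, c < 4) qcoord (f m) c.

(* q_m = x_m + y_m j with x_m = a + b i, y_m = c + d i (q_m = a+bi+cj+dk).
   nu_m = (|x|^2 - |y|^2, Re(2 i x y), Im(2 i x y)); here x y = (ac-bd)+(ad+bc)i *)
Definition nu1 {R : realType} (q : quat R) : R :=
  let: (a, b, c, d) := q in a^+2 + b^+2 - c^+2 - d^+2.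
Definition nu2 {R : realType} (q : quat R) : R :=
  let: (a, b, c, d) := q in - (2 * (a*d + b*c)).
Definition nu3 {R : realType} (q : quat R) : R :=
  let: (a, b, c, d) := q in 2 * (a*c - b*d).

Definition mu1 {R : realType} {k : nat} (Bs : ('I_k -> R) -> ('I_k -> R) -> R)
  (p : Hk R k) (a : 'I_k -> R) : R := Bs (fun m => nu1 (qrow p m)) a.
Definition mu2 {R : realType} {k : nat} (Bs : ('I_k -> R) -> ('I_k -> R) -> R)
  (p : Hk R k) (a : 'I_k -> R) : R := Bs (fun m => nu2 (qrow p m)) a.
Definition mu3 {R : realType} {k : nat} (Bs : ('I_k -> R) -> ('I_k -> R) -> R)
  (p : Hk R k) (a : 'I_k -> R) : R := Bs (fun m => nu3 (qrow p m)) a.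

(* p in mu_R^{-1}(0) \ {0} (p a representative in H^k of a point of H^k/{+-1}) *)
Definition in_P {R : realType} {k : nat} (u : 'I_k -> int * int)
  (Bs : ('I_k -> R) -> ('I_k -> R) -> R) (p : Hk R k) : Prop :=
  p != 0 /\ forall a, in_g u a -> mu1 Bs p a = 0 /\ mu2 Bs p a = 0 /\ mu3 Bs p a = 0.

(* fundamental vector field of a in R^k (Lie algebra of T^k): the derivative at
   t = 0 of q_m |-> q_m exp(t a_m i), i.e. q_m |-> q_m (a_m i) *)
Definition Afield {R : realType} {k : nat} (p : Hk R k) (a : 'I_k -> R) : Hk R k :=
  mkH (fun m => qmul (qrow p m) (0, a m, 0, 0)).

Definition I1 {R : realType} {k : nat} (X : Hk R k) : Hk R k :=
  mkH (fun m => qmul (0, 1, 0, 0) (qrow X m)).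

Definition dirder {R : realType} {k : nat} (F : Hk R k -> R) (p X : Hk R k) : R :=
  derive1 (fun t : R => F (p + t *: X)) 0.

(* (I_1 dF)_p(X) := dF_p(I_1 X) (transpose action of I_1 on 1-forms) *)
Definition I1d {R : realType} {k : nat} (F : Hk R k -> R) (p X : Hk R k) : R :=
  dirder F p (I1 X).

(* Main.v *)
Require Import Defs.
From HB Require Import structures.
From mathcomp Require Import all_boot all_order all_algebra.
From mathcomp Require Import all_classical all_reals all_analysis.
From mathcomp Require Import ring lra zify.
Import Order.TTheory GRing.Theory Num.Theory.
Import numFieldNormedType.Exports.
Local Open Scope ring_scope.
Ltac clia :=
  repeat match goal with
  | H : is_true (?a < ?b)%N |- _ => revert H
  | H : is_true (?a <= ?b)%N |- _ => revert H
  | H : is_true (?a == ?b) |- _ => match type of a with nat => revert H end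
  | H : is_true (~~ (?a == ?b)) |- _ => match type of a with nat => revert H end
  | H : ?a = ?b |- _ => match type of a with nat => revert H end
  | H : ?a <> ?b |- _ => match type of a with nat => revert H end
  end;
  repeat match goal with H : _ |- _ => clear H end;
  intros; lia.
Lemma sg_nn {R : realDomainType} {x y z : R} : x * y < 0 -> y * z < 0 -> 0 < x * z.
Proof.
move=> h1 h2.
have E : (x * y) * (y * z) = (x * z) * (y * y) by ring.
have P : 0 < (x * y) * (y * z) by rewrite -mulrNN; apply: mulr_gt0; lra.
rewrite E in P; have yy : 0 <= y * y by rewrite -expr2 sqr_ge0.
rewrite real_ltNge ?num_real //; apply/negP => h.
have : x * z * (y * y) <= 0 by apply: mulr_le0_ge0.
lra.
Qed.

Lemma sg_np {R : realDomainType} {x y z : R} : x * y < 0 -> 0 < y * z -> x * z < 0.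
Proof.
move=> h1 h2.
have E : (x * y) * (y * z) = (x * z) * (y * y) by ring.
have P : (x * y) * (y * z) < 0 by rewrite pmulr_llt0.
rewrite E in P; have yy : 0 <= y * y by rewrite -expr2 sqr_ge0.
rewrite real_ltNge ?num_real //; apply/negP => h.
have : 0 <= x * z * (y * y) by apply: mulr_ge0.
lra.
Qed.

Lemma sg_pp {R : realDomainType} {x y z : R} : 0 < x * y -> 0 < y * z -> 0 < x * z.
Proof.
move=> h1 h2.
have E : (x * y) * (y * z) = (x * z) * (y * y) by ring.
have P : 0 < (x * y) * (y * z) by apply: mulr_gt0.
rewrite E in P; have yy : 0 <= y * y by rewrite -expr2 sqr_ge0.
rewrite real_ltNge ?num_real //; apply/negP => h.
have : x * z * (y * y) <= 0 by apply: mulr_le0_ge0.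
lra.
Qed.
Lemma sum_ge_term (R : realDomainType) (k i0 : nat) (F : nat -> R) :
  (forall n, (n < k)%N -> 0 <= F n) -> (i0 < k)%N ->
  F i0 <= \sum_(0 <= n < k) F n.
Proof.
move=> HF Hi.
rewrite big_mkord (bigD1 (Ordinal Hi)) //= lerDl.
by apply: sumr_ge0 => i _; apply: HF.
Qed.

Lemma sep_pos (R : realFieldType) (k : nat) (c u1 u2 : nat -> R) (i0 : nat) :
  (0 < k)%N -> 0 < u1 0 -> u2 0 = 0 ->
  u1 k = - u1 0 -> u2 k = - u2 0 ->
  (forall i j, (i < j)%N -> (j <= k)%N -> ~~ ((i == 0%N) && (j == k)) ->
     0 < u1 i * u2 j - u2 i * u1 j) ->
  (~ exists m n p, [/\ (m < n)%N, (n < p)%N, (p < k)%N & [/\ 0 < c m, c n < 0 & 0 < c p]]) ->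
  \sum_(0 <= n < k) c n * u1 n = 0 -> \sum_(0 <= n < k) c n * u2 n = 0 ->
  (i0 < k)%N -> 0 < c i0 -> (forall n, (n < i0)%N -> c n = 0) -> False.
Proof.
move=> k0 u10 u20 u1k u2k Hu Halt S1 S2 i0k ci0 cbef.
have [k1|k2] := eqVneq k 1%N.
  subst k; move: S1; rewrite big_nat1 => S1.
  have i00 : i0 = 0%N by clia.
  subst i0; move: ci0 S1; nra.
have k2' : (1 < k)%N by clia.
have exP : exists i, (fun n => (n < k)%N && (0 < c n)) i by exists i0; rewrite i0k ci0.
have ubP : forall i, (fun n => (n < k)%N && (0 < c n)) i -> (i <= k)%N.
  by move=> i /andP[/ltnW]. 
case: (ex_maxnP exP ubP) => j /andP[jk cj] jmax.
have hle : forall n, (n <= j)%N -> 0 <= c n.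
  move=> n nj; rewrite leNgt; apply/negP => cn.
  have nj' : (n < j)%N by rewrite ltn_neqAle nj andbT; apply/eqP => E; subst n; lra.
  have ni0 : (i0 < n)%N.
    rewrite ltnNge; apply/negP => ni.
    have [E|lt] := eqVneq n i0; first by subst; lra.
    have : (n < i0)%N by clia.
    by move/cbef => E'; lra.
  by apply: Halt; exists i0, n, j; split => //; clia.
have hgt : forall n, (n < k)%N -> (j < n)%N -> c n <= 0.
  move=> n nk jn; rewrite leNgt; apply/negP => cn.
  by have := jmax n; rewrite nk cn => /(_ isT); clia.
pose t1 := u1 j + u1 j.+1; pose t2 := u2 j + u2 j.+1.
pose mu n := u1 n * t2 - u2 n * t1.
have d0k : u1 0 * u2 k - u2 0 * u1 k = 0 by rewrite u1k u2k; ring.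
have Dge : forall i j, (i < j)%N -> (j <= k)%N -> 0 <= u1 i * u2 j - u2 i * u1 j.
  move=> i j' ij jk'.
  case E: ((i == 0%N) && (j' == k)); last by apply/ltW/Hu => //; rewrite E.
  by move/andP: E => [/eqP -> /eqP ->]; rewrite d0k.
have hmu1 : forall n, (n <= j)%N -> 0 < mu n.
  move=> n nj; rewrite /mu /t1 /t2.
  have [E|lt] := eqVneq n j.
    subst n.
    have H1 : 0 < u1 j * u2 j.+1 - u2 j * u1 j.+1.
      by apply: Hu; [clia|clia|apply/negP => /andP[/eqP E1 /eqP E2]; clia].
    lra.
  have nj' : (n < j)%N by clia.
  have H1 : 0 < u1 n * u2 j - u2 n * u1 j.
    by apply: Hu; [clia|clia|apply/negP => /andP[_ /eqP E2]; clia].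
  have H2 := Dge n j.+1 ltac:(clia) ltac:(clia).
  lra.
have hmu2 : forall n, (n < k)%N -> (j < n)%N -> mu n < 0.
  move=> n nk jn; rewrite /mu /t1 /t2.
  have H1 : 0 < u1 j * u2 n - u2 j * u1 n.
    by apply: Hu; [clia|clia|apply/negP => /andP[_ /eqP E2]; clia].
  have [E|lt] := eqVneq n j.+1.
    subst n; lra.
  have H2 : 0 < u1 j.+1 * u2 n - u2 j.+1 * u1 n.
    by apply: Hu; [clia|clia|apply/negP => /andP[/eqP E1 _]; clia].
  lra.
have term : forall n, (n < k)%N -> 0 <= c n * mu n.
  move=> n nk; case: (leqP n j) => nj.
    by apply: mulr_ge0; [exact: hle | exact/ltW/hmu1].
  by apply: mulr_le0; [exact: hgt | exact/ltW/hmu2].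
have Ssum : \sum_(0 <= n < k) c n * mu n = 0.
  have -> : \sum_(0 <= n < k) c n * mu n =
     (\sum_(0 <= n < k) c n * u1 n) * t2 - (\sum_(0 <= n < k) c n * u2 n) * t1.
    rewrite (eq_bigr (fun n => c n * u1 n * t2 - c n * u2 n * t1)); last by move=> n _; rewrite /mu; ring.
    by rewrite sumrB -!big_distrl.
  by rewrite S1 S2; ring.
have := @sum_ge_term _ _ _ _ term i0k; rewrite Ssum.
have i0j : (i0 <= j)%N by apply: jmax; rewrite i0k ci0.
have := hmu1 i0 i0j.
move=> h1 h2; have : 0 < c i0 * mu i0 by apply: mulr_gt0.
lra.
Qed.

Lemma sep (R : realFieldType) (k : nat) (c u1 u2 : nat -> R) :
  (0 < k)%N -> 0 < u1 0 -> u2 0 = 0 ->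
  u1 k = - u1 0 -> u2 k = - u2 0 ->
  (forall i j, (i < j)%N -> (j <= k)%N -> ~~ ((i == 0%N) && (j == k)) ->
     0 < u1 i * u2 j - u2 i * u1 j) ->
  (~ exists m n p, [/\ (m < n)%N, (n < p)%N, (p < k)%N & [/\ 0 < c m, c n < 0 & 0 < c p]]) ->
  (~ exists m n p, [/\ (m < n)%N, (n < p)%N, (p < k)%N & [/\ c m < 0, 0 < c n & c p < 0]]) ->
  \sum_(0 <= n < k) c n * u1 n = 0 -> \sum_(0 <= n < k) c n * u2 n = 0 ->
  forall n, (n < k)%N -> c n = 0.
Proof.
move=> k0 u10 u20 u1k u2k Hu H1 H2 S1 S2 n nk.
apply/eqP; apply/negPn/negP => cn.
have exP : exists i, (fun n => (n < k)%N && (c n != 0)) i by exists n; rewrite nk cn.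
case: (ex_minnP exP) => i0 /andP[i0k ci0] imin.
have bef : forall m, (m < i0)%N -> c m = 0.
  move=> m mi; apply/eqP/negPn/negP => cm.
  have km : (m < k)%N by clia.
  by have := imin m; rewrite km cm => /(_ isT); clia.
have [cpos|cneg] := boolP (0 < c i0).
  exact: (@sep_pos R k c u1 u2 i0 k0 u10 u20 u1k u2k Hu H1 S1 S2 i0k cpos bef).
have cneg' : 0 < - c i0.
  move: cneg ci0; rewrite -real_leNgt ?num_real // => h1 h2; rewrite oppr_gt0 lt_neqAle h1 andbT; exact: h2.
apply: (@sep_pos R k (fun n => - c n) u1 u2 i0 k0 u10 u20 u1k u2k Hu) => //.
- move=> [m [n' [p [mn np pk [a b d]]]]]; apply: H2; exists m, n', p; split => //; split; lra.
- by rewrite (eq_bigr (fun i => - (c i * u1 i))) ?sumrN ?S1 ?oppr0 // => i _; ring.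
- by rewrite (eq_bigr (fun i => - (c i * u2 i))) ?sumrN ?S2 ?oppr0 // => i _; ring.
- by move=> m /bef ->; rewrite oppr0.
Qed.
Lemma Dge_gen {R : realDomainType} {k : nat} {w1 w2 : nat -> R} :
  w1 k = - w1 0 -> w2 k = - w2 0 ->
  (forall i j, (i < j)%N -> (j <= k)%N -> ~~ ((i == 0%N) && (j == k)) ->
     0 < w1 i * w2 j - w2 i * w1 j) ->
  forall i j, (i <= j)%N -> (j <= k)%N -> 0 <= w1 i * w2 j - w2 i * w1 j.
Proof.
move=> w1k w2k Hw i j ij jk.
have [E|ne] := eqVneq i j; first by subst; rewrite mulrC subrr.
case E: ((i == 0%N) && (j == k)); last by apply/ltW/Hw => //; [clia| rewrite E].
move/andP: E => [/eqP -> /eqP ->]; rewrite w1k w2k.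
by have -> : w1 0 * - w2 0 - w2 0 * - w1 0 = 0 by ring.
Qed.

Lemma Dgt_gen {R : realDomainType} {k : nat} {w1 w2 : nat -> R} :
  (forall i j, (i < j)%N -> (j <= k)%N -> ~~ ((i == 0%N) && (j == k)) ->
     0 < w1 i * w2 j - w2 i * w1 j) ->
  forall i j, (i < j)%N -> (j < k)%N -> 0 < w1 i * w2 j - w2 i * w1 j.
Proof.
move=> Hw i j ij jk; apply: Hw => //; first by clia.
by apply/negP => /andP[_ /eqP E]; clia.
Qed.

Lemma noalt_r2 (R : rcfType) (k : nat) (w1 w2 A X : nat -> R) (G11 G12 G22 l1 l2 : R) :
  w1 k = - w1 0 -> w2 k = - w2 0 ->
  (forall i j, (i < j)%N -> (j <= k)%N -> ~~ ((i == 0%N) && (j == k)) ->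
     0 < w1 i * w2 j - w2 i * w1 j) ->
  (forall n, (n <= k)%N -> 0 <= X n /\
     X n ^+ 2 = G11 * w1 n ^+ 2 + 2 * G12 * w1 n * w2 n + G22 * w2 n ^+ 2) ->
  0 <= G11 -> 0 < G11 * G22 - G12 ^+ 2 ->
  (forall n, (n <= k)%N -> A n * X n = l1 * w1 n + l2 * w2 n) ->
  ~ exists m n p, [/\ (m < n)%N, (n < p)%N, (p < k)%N &
       [/\ 0 < A m - A m.+1, A n - A n.+1 < 0 & 0 < A p - A p.+1]].
Proof.
move=> w1k w2k Hw HX G11p Dp Ha [m [n [p [mn np pk [cm cn cp]]]]].
have k3 : (2 < k)%N by clia.
have Dge := Dge_gen w1k w2k Hw.
have Dgt := Dgt_gen Hw.
pose D := G11 * G22 - G12 ^+ 2.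
have G11pos : 0 < G11.
  rewrite lt_neqAle G11p andbT; apply/eqP => E; move: Dp; rewrite -E mul0r sub0r oppr_gt0 => h.
  by have := sqr_ge0 G12; lra.
pose Q (z1 z2 : R) := G11 * z1 ^+ 2 + 2 * G12 * z1 * z2 + G22 * z2 ^+ 2.
have QG : forall z1 z2, G11 * Q z1 z2 = (G11 * z1 + G12 * z2) ^+ 2 + D * z2 ^+ 2.
  by move=> z1 z2; rewrite /Q /D; ring.
have Qge : forall z1 z2, 0 <= Q z1 z2.
  move=> z1 z2; have := QG z1 z2.
  have h1 : 0 <= (G11 * z1 + G12 * z2) ^+ 2 by apply: sqr_ge0.
  have h2 : 0 <= D * z2 ^+ 2 by apply: mulr_ge0; [exact: ltW | apply: sqr_ge0].
  move=> E; move: G11pos h1 h2 E; nra.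
have wnz : forall i, (i <= k)%N -> 0 < w1 i ^+ 2 + w2 i ^+ 2.
  move=> i ik; rewrite real_ltNge ?num_real //; apply/negP => h.
  have e1 : w1 i = 0 by move: h; nra.
  have e2 : w2 i = 0 by move: h; nra.
  have [i0|i0] := eqVneq i 0%N.
    subst i; have := Dgt 0%N 1%N isT ltac:(clia); rewrite e1 e2; lra.
  have [ik'|ik'] := eqVneq i k.
    subst i; have := Dgt 0%N 1%N isT ltac:(clia).
    move: e1 e2; rewrite w1k w2k => e1 e2.
    have -> : w1 0 = 0 by lra.
    have -> : w2 0 = 0 by lra.
    lra.
  have := Dgt 0%N i ltac:(clia) ltac:(clia); rewrite e1 e2; lra.
have Xpos : forall i, (i <= k)%N -> 0 < X i.
  move=> i ik; have [X0 XE] := HX i ik.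
  rewrite lt_neqAle X0 andbT; apply/eqP => E.
  have Q0 : Q (w1 i) (w2 i) = 0 by rewrite /Q -XE -E expr0n.
  have := QG (w1 i) (w2 i); rewrite Q0 mulr0 => h.
  have h1 : w2 i = 0.
    have : D * w2 i ^+ 2 = 0.
      have a1 : 0 <= (G11 * w1 i + G12 * w2 i) ^+ 2 by apply: sqr_ge0.
      have a2 : 0 <= D * w2 i ^+ 2 by apply: mulr_ge0; [exact: ltW | apply: sqr_ge0].
      lra.
    move/eqP; rewrite mulf_eq0 (gt_eqF Dp) /= expf_eq0 /= => /eqP //.
  have h2 : w1 i = 0.
    move: h; rewrite h1 mulr0 addr0 expr0n /= mulr0 addr0 => /esym/eqP.
    by rewrite expf_eq0 /= mulf_eq0 (gt_eqF G11pos) /= => /eqP.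
  by have := wnz i ik; rewrite h1 h2 expr0n /= addr0; lra.
pose y1 i := w1 i / X i; pose y2 i := w2 i / X i.
have Ay : forall i, (i <= k)%N -> A i = l1 * y1 i + l2 * y2 i.
  move=> i ik; have Xi := Xpos i ik.
  have := Ha i ik; rewrite /y1 /y2 => E.
  apply: (mulIf (lt0r_neq0 Xi)); rewrite E; field; exact: lt0r_neq0.
have Qy : forall i, (i <= k)%N -> Q (y1 i) (y2 i) = 1.
  move=> i ik; have Xi := Xpos i ik; have [_ XE] := HX i ik.
  have -> : Q (y1 i) (y2 i) = Q (w1 i) (w2 i) / X i ^+ 2.
    by rewrite /Q /y1 /y2; field; exact: lt0r_neq0.
  by rewrite /Q -XE divff // expf_neq0 // lt0r_neq0.
have dY : forall i j, (i <= k)%N -> (j <= k)%N ->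
   y1 i * y2 j - y2 i * y1 j = (w1 i * w2 j - w2 i * w1 j) / (X i * X j).
  move=> i j ik jk; rewrite /y1 /y2; field.
  by apply/andP; split; apply: lt0r_neq0; apply: Xpos.
have dYge : forall i j, (i <= j)%N -> (j <= k)%N -> 0 <= y1 i * y2 j - y2 i * y1 j.
  move=> i j ij jk; rewrite dY //; last by clia.
  apply: divr_ge0; first exact: Dge.
  by apply/ltW/mulr_gt0; apply: Xpos; clia.
have dYgt : forall i j, (i < j)%N -> (j < k)%N -> 0 < y1 i * y2 j - y2 i * y1 j.
  move=> i j ij jk; rewrite dY; [|clia|clia].
  apply: divr_gt0; first exact: Dgt.
  by apply/mulr_gt0; apply: Xpos; clia.
pose e1 i := y1 i - y1 i.+1; pose e2 i := y2 i - y2 i.+1.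
pose s1 i := y1 i + y1 i.+1; pose s2 i := y2 i + y2 i.+1.
pose B (a1 a2 b1 b2 : R) := G11 * a1 * b1 + G12 * (a1 * b2 + a2 * b1) + G22 * a2 * b2.
have Bse : forall i, (i < k)%N -> B (s1 i) (s2 i) (e1 i) (e2 i) = 0.
  move=> i ik; have q1 := Qy i (ltnW ik); have q2 := Qy i.+1 ik.
  have -> : B (s1 i) (s2 i) (e1 i) (e2 i) = Q (y1 i) (y2 i) - Q (y1 i.+1) (y2 i.+1).
    by rewrite /B /Q /s1 /s2 /e1 /e2; ring.
  by rewrite q1 q2 subrr.
have key : forall a1 a2 b1 b2 c1 c2 d1 d2 : R,
  B a1 a2 c1 c2 = 0 -> B b1 b2 d1 d2 = 0 ->
  Q a1 a2 * Q b1 b2 * (c1 * d2 - c2 * d1) =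
  D * (a1 * c2 - a2 * c1) * (b1 * d2 - b2 * d1) * (a1 * b2 - a2 * b1).
  move=> a1 a2 b1 b2 c1 c2 d1 d2 B1 B2.
  pose jg1 (z1 z2 : R) := - (G12 * z1 + G22 * z2).
  pose jg2 (z1 z2 : R) := G11 * z1 + G12 * z2.
  have id1 : forall z1 z2 x1 x2, Q z1 z2 * x1 =
     (z1 * x2 - z2 * x1) * jg1 z1 z2 + B z1 z2 x1 x2 * z1.
    by move=> *; rewrite /Q /B /jg1; ring.
  have id2 : forall z1 z2 x1 x2, Q z1 z2 * x2 =
     (z1 * x2 - z2 * x1) * jg2 z1 z2 + B z1 z2 x1 x2 * z2.
    by move=> *; rewrite /Q /B /jg2; ring.
  have -> : Q a1 a2 * Q b1 b2 * (c1 * d2 - c2 * d1) =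
    (Q a1 a2 * c1) * (Q b1 b2 * d2) - (Q a1 a2 * c2) * (Q b1 b2 * d1) by ring.
  rewrite (id1 a1 a2 c1 c2) (id2 b1 b2 d1 d2) (id2 a1 a2 c1 c2) (id1 b1 b2 d1 d2) B1 B2.
  by rewrite /jg1 /jg2 /D; ring.
have dSE : forall i, (i < k)%N -> s1 i * e2 i - s2 i * e1 i < 0.
  move=> i ik.
  have -> : s1 i * e2 i - s2 i * e1 i = - 2 * (y1 i * y2 i.+1 - y2 i * y1 i.+1).
    by rewrite /s1 /s2 /e1 /e2; ring.
  have : 0 < y1 i * y2 i.+1 - y2 i * y1 i.+1.
    rewrite dY //; last by clia.
    apply: divr_gt0; last by apply/mulr_gt0; apply: Xpos; clia.
    by apply: Hw => //; apply/negP => /andP[/eqP E1 /eqP E2]; clia.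
  lra.
have dSS : forall i j, (i < j)%N -> (j < k)%N -> 0 < s1 i * s2 j - s2 i * s1 j.
  move=> i j ij jk.
  have -> : s1 i * s2 j - s2 i * s1 j =
    (y1 i * y2 j - y2 i * y1 j) + (y1 i * y2 j.+1 - y2 i * y1 j.+1) +
    (y1 i.+1 * y2 j - y2 i.+1 * y1 j) + (y1 i.+1 * y2 j.+1 - y2 i.+1 * y1 j.+1).
    by rewrite /s1 /s2; ring.
  have h1 := dYgt i j ij jk.
  have h2 := dYge i j.+1 ltac:(clia) ltac:(clia).
  have h3 := dYge i.+1 j ltac:(clia) ltac:(clia).
  have h4 := dYge i.+1 j.+1 ltac:(clia) ltac:(clia).
  lra.
have dEE : forall i j, (i < j)%N -> (j < k)%N -> 0 < e1 i * e2 j - e2 i * e1 j.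
  move=> i j ij jk.
  have K := key _ _ _ _ _ _ _ _ (Bse i ltac:(clia)) (Bse j jk).
  have h1 := dSE i ltac:(clia); have h2 := dSE j jk; have h3 := dSS i j ij jk.
  have P1 : 0 < D * (s1 i * e2 i - s2 i * e1 i) * (s1 j * e2 j - s2 j * e1 j) *
             (s1 i * s2 j - s2 i * s1 j).
    have ab : 0 < (s1 i * e2 i - s2 i * e1 i) * (s1 j * e2 j - s2 j * e1 j).
      set a := (s1 i * e2 i - s2 i * e1 i) in h1 *; set b := (s1 j * e2 j - s2 j * e1 j) in h2 *.
      by rewrite -mulrNN; apply: mulr_gt0; lra.
    by rewrite -(mulrA D); apply: mulr_gt0 => //; apply: mulr_gt0.
  rewrite -K in P1.
  have q1 := Qge (s1 i) (s2 i); have q2 := Qge (s1 j) (s2 j).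
  have q12 : 0 <= Q (s1 i) (s2 i) * Q (s1 j) (s2 j) by apply: mulr_ge0.
  move: q12 P1; set x := Q _ _ * Q _ _; set y := (e1 i * e2 j - e2 i * e1 j).
  move=> q12 P1; rewrite real_ltNge ?num_real //; apply/negP => yle.
  have : x * y <= 0 by apply: mulr_ge0_le0.
  lra.
have cE : forall i, (i < k)%N -> A i - A i.+1 = l1 * e1 i + l2 * e2 i.
  by move=> i ik; rewrite Ay ?Ay //; [rewrite /e1 /e2; ring | clia].
have Pl : (e1 m * e2 p - e2 m * e1 p) * (A n - A n.+1) =
   (e1 n * e2 p - e2 n * e1 p) * (A m - A m.+1) +
   (e1 m * e2 n - e2 m * e1 n) * (A p - A p.+1).
  rewrite !cE; [|clia|clia|clia]; ring.
have t1 : 0 < (e1 n * e2 p - e2 n * e1 p) * (A m - A m.+1) by apply: mulr_gt0 => //; apply: dEE.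
have t2 : 0 < (e1 m * e2 n - e2 m * e1 n) * (A p - A p.+1) by apply: mulr_gt0 => //; apply: dEE; clia.
have t3 : (e1 m * e2 p - e2 m * e1 p) * (A n - A n.+1) < 0.
  have := dEE m p ltac:(clia) pk; move: cn; set z := (e1 m * e2 p - e2 m * e1 p); move=> cn zp.
  by rewrite pmulr_rlt0.
lra.
Qed.
Lemma sqrt_repr {R : rcfType} {G11 G12 G22 : R} :
  0 <= G11 -> 0 <= G22 -> G12 ^+ 2 = G11 * G22 ->
  exists r1 r2 : R, forall z1 z2, 
    G11 * z1 ^+ 2 + 2 * G12 * z1 * z2 + G22 * z2 ^+ 2 = (r1 * z1 + r2 * z2) ^+ 2.
Proof.
move=> h11 h22 hD.
have [G0|Gp] := eqVneq G11 0.
  have G12z : G12 = 0.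
    have : G12 ^+ 2 == 0 by rewrite hD G0 mul0r.
    by rewrite expf_eq0 /= => /eqP.
  exists 0, (Num.sqrt G22) => z1 z2.
  rewrite G0 G12z.
  have -> : (0 * z1 + Num.sqrt G22 * z2) ^+ 2 = Num.sqrt G22 ^+ 2 * z2 ^+ 2 by ring.
  rewrite sqr_sqrtr //; ring.
have G11p : 0 < G11 by rewrite lt_neqAle eq_sym Gp.
have s0 : Num.sqrt G11 != 0 by rewrite sqrtr_eq0 -ltNge.
exists (Num.sqrt G11), (G12 / Num.sqrt G11) => z1 z2.
have G22e : G22 = G12 ^+ 2 / G11 by rewrite hD; field; rewrite Gp.
have sq := sqr_sqrtr h11.
have -> : (Num.sqrt G11 * z1 + G12 / Num.sqrt G11 * z2) ^+ 2 =
   Num.sqrt G11 ^+ 2 * z1 ^+ 2 + 2 * G12 * z1 * z2 + G12 ^+ 2 / Num.sqrt G11 ^+ 2 * z2 ^+ 2.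
  by field.
by rewrite sq G22e.
Qed.

Lemma noalt_r1 (R : rcfType) (k : nat) (w1 w2 A X : nat -> R) (G11 G12 G22 l1 l2 : R) :
  w1 k = - w1 0 -> w2 k = - w2 0 ->
  (forall i j, (i < j)%N -> (j <= k)%N -> ~~ ((i == 0%N) && (j == k)) ->
     0 < w1 i * w2 j - w2 i * w1 j) ->
  (forall n, (n <= k)%N -> 0 <= X n /\
     X n ^+ 2 = G11 * w1 n ^+ 2 + 2 * G12 * w1 n * w2 n + G22 * w2 n ^+ 2) ->
  0 <= G11 -> 0 <= G22 -> G12 ^+ 2 = G11 * G22 ->
  (exists n, (n < k)%N /\ X n != 0) ->
  (forall n, (n <= k)%N -> A n * X n = l1 * w1 n + l2 * w2 n) ->
  ~ exists m n p, [/\ (m < n)%N, (n < p)%N, (p < k)%N &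
       [/\ 0 < A m - A m.+1, A n - A n.+1 < 0 & 0 < A p - A p.+1]].
Proof.
move=> w1k w2k Hw HX G11p G22p hD Hnz Ha [m [n [p [mn np pk [cm cn cp]]]]].
have k3 : (2 < k)%N by clia.
have Dge := Dge_gen w1k w2k Hw.
have Dgt := Dgt_gen Hw.
have [r1 [r2 Hr]] := sqrt_repr G11p G22p hD.
pose Rn i := r1 * w1 i + r2 * w2 i.
have XR : forall i, (i <= k)%N -> X i = `|Rn i|.
  move=> i ik; have [X0 XE] := HX i ik; rewrite Hr in XE.
  apply/eqP; rewrite -(@eqrXn2 _ 2 _ _ isT X0 (normr_ge0 _)).
  by rewrite XE real_normK ?num_real.
have Rk : Rn k = - Rn 0 by rewrite /Rn w1k w2k; ring.
pose dw i j := w1 i * w2 j - w2 i * w1 j.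
have Pl : forall i j l, dw i l * Rn j = dw j l * Rn i + dw i j * Rn l.
  by move=> i j l; rewrite /dw /Rn; ring.
have F1 : forall i j l, (i < j)%N -> (j < l)%N -> (l <= k)%N ->
    Rn i * Rn j < 0 -> Rn j * Rn l < 0 -> False.
  move=> i j l ij jl lk h1 h2.
  have a := Hw j l jl lk ltac:(apply/negP => /andP[/eqP E _]; clia).
  have b := Hw i j ij ltac:(clia) ltac:(apply/negP => /andP[_ /eqP E]; clia).
  have c := Dge i l ltac:(clia) lk.
  have E : dw i l * Rn j ^+ 2 = dw j l * (Rn i * Rn j) + dw i j * (Rn j * Rn l).
    by rewrite expr2 mulrA Pl; ring.
  have : 0 <= dw i l * Rn j ^+ 2 by apply: mulr_ge0 => //; apply: sqr_ge0.
  have : dw j l * (Rn i * Rn j) < 0 by rewrite pmulr_rlt0.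
  have : dw i j * (Rn j * Rn l) < 0 by rewrite pmulr_rlt0.
  lra.
have uniq0 : forall i j, (i < j)%N -> (j <= k)%N -> ~~ ((i == 0%N) && (j == k)) ->
    Rn i = 0 -> Rn j = 0 -> False.
  move=> i j ij jk nij Ri Rj.
  have d := Hw i j ij jk nij.
  have e1 : r1 * dw i j = Rn i * w2 j - Rn j * w2 i by rewrite /dw /Rn; ring.
  have e2 : r2 * dw i j = - (Rn i * w1 j - Rn j * w1 i) by rewrite /dw /Rn; ring.
  rewrite Ri Rj !mul0r subrr ?oppr0 in e1 e2.
  have r10 : r1 = 0 by move/eqP: e1; rewrite mulf_eq0 (gt_eqF d) orbF => /eqP.
  have r20 : r2 = 0 by move/eqP: e2; rewrite mulf_eq0 (gt_eqF d) orbF => /eqP.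
  case: Hnz => q [qk]; rewrite XR; last by clia.
  by rewrite /Rn r10 r20 !mul0r addr0 normr0 eqxx.
pose D := l1 * r2 - l2 * r1.
have F2 : forall i, (i < k)%N -> 0 < Rn i * Rn i.+1 ->
    (A i - A i.+1) * Rn i * `|Rn i.+1| = D * dw i i.+1.
  move=> i ik P.
  have a1 := Ha i (ltnW ik); have a2 := Ha i.+1 ik.
  rewrite !XR in a1 a2; [|clia|clia].
  have sg : Rn i * `|Rn i.+1| = `|Rn i| * Rn i.+1.
    have [Rp|Rn0] := ltP 0 (Rn i).
      have : 0 < Rn i.+1 by move: P; rewrite pmulr_rgt0.
      by move=> h; rewrite !gtr0_norm.
    have Rneg : Rn i < 0.
      rewrite lt_neqAle Rn0 andbT; apply/eqP => E; move: P; rewrite E mul0r; lra.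
    have : Rn i.+1 < 0 by move: P; rewrite nmulr_rgt0.
    by move=> h; rewrite !ltr0_norm //; ring.
  have -> : (A i - A i.+1) * Rn i * `|Rn i.+1| =
      A i * (Rn i * `|Rn i.+1|) - (A i.+1 * `|Rn i.+1|) * Rn i by ring.
  rewrite sg mulrA a1 a2 /D /dw /Rn; ring.
have partner : forall j, (j <= k)%N -> exists j', (j' <= k)%N /\ dw j j' != 0.
  move=> j jk.
  have [j0|j0] := eqVneq j 0%N.
    subst j; exists 1%N; split; first by clia.
    by apply: lt0r_neq0; apply: Dgt; clia.
  have [jk'|jk'] := eqVneq j k.
    subst j; exists 1%N; split; first by clia.
    rewrite /dw w1k w2k.
    have := Dgt 0%N 1%N isT ltac:(clia) => h.
    by apply/eqP => E; lra.
  exists 0%N; split; first by clia.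
  have := Dgt 0%N j ltac:(clia) ltac:(clia) => h.
  by apply/eqP => E; rewrite /dw in E; lra.
have dpos : forall i, (i < k)%N -> 0 < dw i i.+1.
  move=> i ik; apply: Hw => //; apply/negP => /andP[/eqP E1 /eqP E2]; clia.
have F3 : forall j, (j <= k)%N -> Rn j = 0 -> D = 0.
  move=> j jk Rj.
  have lw : l1 * w1 j + l2 * w2 j = 0 by rewrite -Ha // XR // Rj normr0 mulr0.
  have [j' [j'k dj]] := partner j jk.
  have E : D * dw j j' = (l1 * w1 j + l2 * w2 j) * Rn j' - (l1 * w1 j' + l2 * w2 j') * Rn j.
    by rewrite /D /dw /Rn; ring.
  rewrite lw Rj mul0r mulr0 subrr in E.
  by move/eqP: E; rewrite mulf_eq0 (negbTE dj) orbF => /eqP.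
pose c i := A i - A i.+1.
have [NZ|Z] := boolP [forall i : 'I_k.+1, Rn i != 0].
  have nz : forall i, (i <= k)%N -> Rn i != 0.
    by move=> i ik; move/forallP: NZ => /(_ (Ordinal (n:=k.+1) (m:=i) ik)).
  have nP : forall i, (i < k)%N -> ~~ (0 < Rn i * Rn i.+1) -> Rn i * Rn i.+1 < 0.
    move=> i ik h; rewrite lt_neqAle mulf_eq0 negb_or !nz //; last by clia.
    by rewrite leNgt.
  have F6 : forall i j, (i < k)%N -> (j < k)%N -> 0 < Rn i * Rn i.+1 -> 0 < Rn j * Rn j.+1 ->
      0 <= (c i * c j) * (Rn i * Rn j).
    move=> i j ik jk Pi Pj.
    have e1 := F2 i ik Pi; have e2 := F2 j jk Pj.
    have E : ((c i * c j) * (Rn i * Rn j)) * (`|Rn i.+1| * `|Rn j.+1|) =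
       D ^+ 2 * (dw i i.+1 * dw j j.+1).
      have -> : D ^+ 2 * (dw i i.+1 * dw j j.+1) = (D * dw i i.+1) * (D * dw j j.+1) by ring.
      rewrite -e1 -e2 /c; ring.
    have pos : 0 < `|Rn i.+1| * `|Rn j.+1|.
      by apply: mulr_gt0; rewrite normr_gt0 nz //; clia.
    rewrite -(pmulr_lge0 _ pos) E; apply: mulr_ge0; first exact: sqr_ge0.
    by apply: mulr_ge0; apply/ltW/dpos.
  have F4 : forall i j, (i < j)%N -> (j < k)%N -> ~~ (0 < Rn i * Rn i.+1) ->
      ~~ (0 < Rn j * Rn j.+1) -> False.
    move=> i j ij jk Pi Pj.
    have hi := nP i ltac:(clia) Pi; have hj := nP j jk Pj.
    have [ij1|ij1] := eqVneq i.+1 j.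
      subst j; by apply: (F1 i i.+1 i.+2); (assumption || clia).
    have [h|h] := boolP (Rn i.+1 * Rn j < 0).
      by apply: (F1 i i.+1 j); (assumption || clia).
    have h' : 0 < Rn i.+1 * Rn j.
      rewrite lt_def mulf_eq0 negb_or !nz //; [|clia|clia].
      by rewrite -leNgt in h.
    have := sg_np hi h'; move=> h2; by apply: (F1 i j j.+1); (assumption || clia).
  have chain : forall a b, (a <= b)%N -> (b <= k)%N ->
      (forall i, (a <= i)%N -> (i < b)%N -> 0 < Rn i * Rn i.+1) -> 0 < Rn a * Rn b.
    move=> a b; elim: b => [|b IH] ab bk H.
      have a0 : a = 0%N by clia.
      by subst a; rewrite -expr2 lt_def sqrf_eq0 nz // sqr_ge0.
    have [ab'|ab'] := eqVneq a b.+1.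
      by subst a; rewrite -expr2 lt_def sqrf_eq0 nz // sqr_ge0.
    have h1 := IH ltac:(clia) ltac:(clia) (fun i h1 h2 => H i h1 ltac:(clia)).
    have h2 := H b ltac:(clia) ltac:(clia).
    exact: sg_pp h1 h2.
  have cmn : c m * c n < 0 by rewrite /c pmulr_rlt0.
  have cnp : c n * c p < 0 by rewrite /c mulrC pmulr_rlt0.
  have cmp : 0 < c m * c p by apply: mulr_gt0.
  have [Pm|Pm] := boolP (0 < Rn m * Rn m.+1);
  have [Pn|Pn] := boolP (0 < Rn n * Rn n.+1);
  have [Pp|Pp] := boolP (0 < Rn p * Rn p.+1).
  - have h1 := F6 m n ltac:(clia) ltac:(clia) Pm Pn.
    have h2 := F6 n p ltac:(clia) pk Pn Pp.
    have r1' : Rn m * Rn n < 0.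
      rewrite lt_neqAle mulf_eq0 negb_or !nz //; [|clia|clia].
      by move: h1; rewrite (nmulr_rge0 _ cmn).
    have r2' : Rn n * Rn p < 0.
      rewrite lt_neqAle mulf_eq0 negb_or !nz //; [|clia|clia].
      by move: h2; rewrite (nmulr_rge0 _ cnp).
    by apply: (F1 m n p); (assumption || clia).
  - have h := chain m n ltac:(clia) ltac:(clia) (fun i h1 h2 =>
      ltac:(apply/negPn/negP => Pi; exact: (F4 i p ltac:(clia) pk Pi Pp))).
    have h2 := F6 m n ltac:(clia) ltac:(clia) Pm Pn.
    by move: h2; rewrite (nmulr_rge0 _ cmn) leNgt h.
  - have h1 := chain m n ltac:(clia) ltac:(clia) (fun i h1 h2 =>
      ltac:(apply/negPn/negP => Pi; exact: (F4 i n ltac:(clia) ltac:(clia) Pi Pn))).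
    have h2 := chain n.+1 p ltac:(clia) ltac:(clia) (fun i h1 h2 =>
      ltac:(apply/negPn/negP => Pi; exact: (F4 n i ltac:(clia) ltac:(clia) Pn Pi))).
    have h3 := nP n ltac:(clia) Pn.
    have h4 : Rn m * Rn n.+1 < 0 by rewrite mulrC; apply: (@sg_np _ _ (Rn n)); rewrite mulrC.
    have h5 : Rn m * Rn p < 0 by apply: (sg_np h4 h2).
    have h6 := F6 m p ltac:(clia) pk Pm Pp.
    by move: h6; rewrite (pmulr_rge0 _ cmp) leNgt h5.
  - by exfalso; exact: (F4 n p ltac:(clia) pk Pn Pp).
  - have h := chain n p ltac:(clia) ltac:(clia) (fun i h1 h2 =>
      ltac:(apply/negPn/negP => Pi; exact: (F4 m i ltac:(clia) ltac:(clia) Pm Pi))).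
    have h2 := F6 n p ltac:(clia) pk Pn Pp.
    by move: h2; rewrite (nmulr_rge0 _ cnp) leNgt h.
  - by exfalso; exact: (F4 m p ltac:(clia) pk Pm Pp).
  - by exfalso; exact: (F4 m n ltac:(clia) ltac:(clia) Pm Pn).
  - by exfalso; exact: (F4 m n ltac:(clia) ltac:(clia) Pm Pn).
have [j0 [j0k Rj0]] : exists j0, (j0 < k)%N /\ Rn j0 = 0.
  move/forallPn: Z => [[j jk]] /negPn /eqP /= Rj.
  have [jk'|jk'] := eqVneq j k.
    by subst j; exists 0%N; split; [clia | move: Rj; rewrite Rk; lra].
  by exists j; split; [clia|].
have D0 := F3 j0 (ltnW j0k) Rj0.
have cP : forall i, (i < k)%N -> 0 < Rn i * Rn i.+1 -> c i = 0.
  move=> i ik Pi; have := F2 i ik Pi; rewrite D0 mul0r => /eqP.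
  rewrite !mulf_eq0 normr_eq0 => /orP[/orP[/eqP //|] | ] /eqP E; move: Pi; rewrite E;
    [rewrite mul0r | rewrite mulr0]; lra.
have nonP : forall i, (i < k)%N -> c i != 0 -> ~~ (0 < Rn i * Rn i.+1).
  by move=> i ik ci; apply/negP => Pi; move: ci; rewrite (cP i ik Pi) eqxx.
have Zn : forall i, (i <= k)%N -> i != j0 -> ~~ ((j0 == 0%N) && (i == k)) -> Rn i != 0.
  move=> i ik ij0 nk; apply/eqP => Ri.
  have [ij|ji] := ltnP i j0.
    apply: (uniq0 i j0 ij ltac:(clia)) => //; apply/negP => /andP[_ /eqP E]; clia.
  have ji' : (j0 < i)%N by rewrite ltn_neqAle eq_sym ij0 ji.
  by apply: (uniq0 j0 i ji' ik nk).
have claim : forall i, (i < k)%N -> ~~ (0 < Rn i * Rn i.+1) ->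
    (i.+1 == j0) || (i == j0) || ((j0 == 0%N) && (i.+1 == k)).
  move=> i ik Pi; apply/negPn/negP; rewrite !negb_or => /andP[/andP[h1 h2] h3].
  have Ri := Zn i (ltnW ik) h2 ltac:(apply/negP => /andP[_ /eqP E]; clia).
  have Ri1 := Zn i.+1 ik h1 h3.
  have neg : Rn i * Rn i.+1 < 0.
    rewrite lt_neqAle mulf_eq0 negb_or Ri Ri1 /=.
    by rewrite leNgt.
  have Zsep : forall a l, (a < j0)%N -> (j0 < l)%N -> (l <= k)%N -> Rn a != 0 -> Rn a * Rn l < 0.
    move=> a l aj jl lk Ra.
    have al := Hw j0 l jl lk ltac:(apply/negP => /andP[/eqP E _]; clia).
    have be := Hw a j0 aj ltac:(clia) ltac:(apply/negP => /andP[_ /eqP E]; clia).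
    have E := Pl a j0 l; rewrite Rj0 mulr0 in E.
    have E2 : dw j0 l * Rn a ^+ 2 = - (dw a j0 * (Rn a * Rn l)).
      have H : Rn a * (dw j0 l * Rn a + dw a j0 * Rn l) = 0 by rewrite -E mulr0.
      by apply/eqP; rewrite -subr_eq0; apply/eqP; rewrite -[RHS]H; ring.
    have : 0 < dw j0 l * Rn a ^+ 2 by apply: mulr_gt0 => //; rewrite lt_def sqrf_eq0 Ra sqr_ge0.
    rewrite E2 oppr_gt0 => h; move: h; rewrite pmulr_rlt0 //.
  have [ij|ji] := ltnP i.+1 j0.
    have a1 := Zsep i j0.+1 ltac:(clia) ltac:(clia) ltac:(clia) Ri.
    have a2 := Zsep i.+1 j0.+1 ltac:(clia) ltac:(clia) ltac:(clia) Ri1.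
    have := sg_nn a1 ltac:(rewrite mulrC; exact: a2); lra.
  have ji' : (j0 < i)%N by move/eqP: h1; move/eqP: h2; clia.
  have [j00|j0p] := eqVneq j0 0%N.
    subst j0.
    have ik1 : (i.+1 < k)%N by move: h3; rewrite eqxx /=; move: ik; clia.
    have Rk0 : Rn k = 0 by rewrite Rk Rj0 oppr0.
    have a := Hw i k ltac:(clia) (leqnn k) ltac:(apply/negP => /andP[/eqP E _]; clia).
    have b := Hw i.+1 k ltac:(clia) (leqnn k) ltac:(apply/negP => /andP[/eqP E _]; clia).
    have E := Pl i i.+1 k; rewrite Rk0 mulr0 addr0 in E.
    have E2 : dw i k * (Rn i * Rn i.+1) = dw i.+1 k * Rn i ^+ 2.
      by rewrite expr2 mulrA (mulrC _ (Rn i)) mulrA (mulrC _ (Rn i)) -mulrA E; ring.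
    have : 0 < dw i.+1 k * Rn i ^+ 2 by apply: mulr_gt0 => //; rewrite lt_def sqrf_eq0 Ri sqr_ge0.
    rewrite -E2 pmulr_rgt0 // => h; lra.
  have Rb : Rn j0.-1 != 0.
    apply: Zn; [clia | apply/negP => /eqP E; clia | apply/negP => /andP[/eqP E _]; clia].
  have a1 := Zsep j0.-1 i ltac:(clia) ji' ltac:(clia) Rb.
  have a2 := Zsep j0.-1 i.+1 ltac:(clia) ltac:(clia) ik Rb.
  have a1' : Rn i * Rn j0.-1 < 0 by rewrite mulrC.
  have := sg_nn a1' a2; lra.
have cm0 : c m != 0 by apply: lt0r_neq0.
have cn0 : c n != 0 by apply: ltr0_neq0.
have cp0 : c p != 0 by apply: lt0r_neq0.
have hm := claim m ltac:(clia) (nonP m ltac:(clia) cm0).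
have hn := claim n ltac:(clia) (nonP n ltac:(clia) cn0).
have hp := claim p ltac:(clia) (nonP p ltac:(clia) cp0).
move: hm hn hp; move: mn np pk; clia.
Qed.
Lemma noalt_any (R : rcfType) (k : nat) (w1 w2 A X : nat -> R) (G11 G12 G22 l1 l2 : R) :
  w1 k = - w1 0 -> w2 k = - w2 0 ->
  (forall i j, (i < j)%N -> (j <= k)%N -> ~~ ((i == 0%N) && (j == k)) ->
     0 < w1 i * w2 j - w2 i * w1 j) ->
  (forall n, (n <= k)%N -> 0 <= X n /\
     X n ^+ 2 = G11 * w1 n ^+ 2 + 2 * G12 * w1 n * w2 n + G22 * w2 n ^+ 2) ->
  0 <= G11 -> 0 <= G22 -> G12 ^+ 2 <= G11 * G22 ->
  (exists n, (n < k)%N /\ X n != 0) ->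
  (forall n, (n <= k)%N -> A n * X n = l1 * w1 n + l2 * w2 n) ->
  ~ exists m n p, [/\ (m < n)%N, (n < p)%N, (p < k)%N &
       [/\ 0 < A m - A m.+1, A n - A n.+1 < 0 & 0 < A p - A p.+1]].
Proof.
move=> w1k w2k Hw HX G11p G22p GD Hnz Ha.
have [Dp|Dn] := boolP (0 < G11 * G22 - G12 ^+ 2).
  exact: (@noalt_r2 _ _ _ _ _ _ _ _ _ _ _ w1k w2k Hw HX G11p Dp Ha).
have hD : G12 ^+ 2 = G11 * G22 by move: Dn; rewrite -leNgt => h; lra.
exact: (@noalt_r1 _ _ _ _ _ _ _ _ _ _ _ w1k w2k Hw HX G11p G22p hD Hnz Ha).
Qed.

Lemma core (R : rcfType) (k : nat) (u1 u2 w1 w2 A X : nat -> R) (G11 G12 G22 l1 l2 : R) :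
  (0 < k)%N -> 0 < u1 0 -> u2 0 = 0 ->
  u1 k = - u1 0 -> u2 k = - u2 0 ->
  (forall i j, (i < j)%N -> (j <= k)%N -> ~~ ((i == 0%N) && (j == k)) ->
     0 < u1 i * u2 j - u2 i * u1 j) ->
  w1 k = - w1 0 -> w2 k = - w2 0 ->
  (forall i j, (i < j)%N -> (j <= k)%N -> ~~ ((i == 0%N) && (j == k)) ->
     0 < w1 i * w2 j - w2 i * w1 j) ->
  (forall n, (n <= k)%N -> 0 <= X n /\
     X n ^+ 2 = G11 * w1 n ^+ 2 + 2 * G12 * w1 n * w2 n + G22 * w2 n ^+ 2) ->
  0 <= G11 -> 0 <= G22 -> G12 ^+ 2 <= G11 * G22 ->
  (exists n, (n < k)%N /\ X n != 0) ->
  (forall n, (n <= k)%N -> A n * X n = l1 * w1 n + l2 * w2 n) ->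
  A k = - A 0 ->
  \sum_(0 <= n < k) (A n - A n.+1) * u1 n = 0 ->
  \sum_(0 <= n < k) (A n - A n.+1) * u2 n = 0 ->
  forall n, (n < k)%N -> A n = 0.
Proof.
move=> k0 u10 u20 u1k u2k Hu w1k w2k Hw HX G11p G22p GD Hnz Ha Ak S1 S2.
have N1 := @noalt_any _ _ _ _ _ _ _ _ _ _ _ w1k w2k Hw HX G11p G22p GD Hnz Ha.
have N2 := @noalt_any R k w1 w2 (fun n => - A n) X G11 G12 G22 (- l1) (- l2)
   w1k w2k Hw HX G11p G22p GD Hnz
   (fun n nk => ltac:(rewrite mulNr (Ha n nk); ring)).
have C := @sep R k (fun n => A n - A n.+1) u1 u2 k0 u10 u20 u1k u2k Hu N1
  (fun h => ltac:(apply: N2; move: h => [m [n [p [mn np pk [a b d]]]]];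
      exists m, n, p; split => //; split; lra)) S1 S2.
have Aeq : forall n, (n <= k)%N -> A n = A 0.
  elim=> [|n IH] nk //; rewrite -IH; last by clia.
  by have := C n nk; lra.
have A00 : A 0 = 0 by have := Aeq k (leqnn k); rewrite Ak; lra.
by move=> n nk; rewrite Aeq ?A00 //; clia.
Qed.
Lemma qrow_mkH {R : realType} {k : nat} (f : 'I_k -> quat R) (m : 'I_k) :
  qrow (mkH f) m = f m.
Proof.
rewrite /qrow /mkH !mxE; case: (f m) => [[[a b] c] d].
by rewrite /qcoord !inordK.
Qed.

Definition xq {R : realType} {k : nat} (p : Hk R k) (m : 'I_k) : R :=
  p m (inord 0) ^+ 2 + p m (inord 1) ^+ 2 + p m (inord 2) ^+ 2 + p m (inord 3) ^+ 2.

Lemma dpoly (R : realType) (A B C : R) :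
  derive1 (fun t : R => t * B + (t ^+ 2 * C + A)) 0 = B.
Proof.
rewrite derive1E.
have -> : (fun t : R => t * B + (t ^+ 2 * C + A)) = (id * cst B) + ((id ^+ 2) * cst C + cst A).
  by apply/funext => t.
rewrite derive_val /= !scaler0 !add0r expr1 mulr0.
by rewrite scale0r scaler0 !addr0 scaler1.
Qed.

Lemma Bs_lin {R : realType} {k : nat} {u : 'I_k -> int * int} {theta : 'I_k -> R}
  {Bs : ('I_k -> R) -> ('I_k -> R) -> R} {a} (c : R) (xi eta : 'I_k -> R) :
  Bstar_ok u theta Bs -> in_g u a ->
  Bs (fun i => c * xi i + eta i) a = c * Bs xi a + Bs eta a.
Proof. by move=> [_ [H _]] ga; apply: H. Qed.

Lemma I1d_val {R : realType} {k : nat} (u : 'I_k -> int * int) (theta : 'I_k -> R)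
  (Bs : ('I_k -> R) -> ('I_k -> R) -> R) (p : Hk R k) (a a' : 'I_k -> R) :
  Bstar_ok u theta Bs -> in_g u a' ->
  I1d (fun q => mu1 Bs q a') p (Afield p a) = Bs (fun m => -2 * (a m * xq p m)) a'.
Proof.
move=> HB ga.
pose Y := I1 (Afield p a).
pose L := fun m => -2 * (a m * xq p m).
pose Q := fun m => nu1 (qrow Y m).
pose N := fun m => nu1 (qrow p m).
have Yc : forall m, [/\ Y m (inord 0) = - (p m (inord 0) * a m), Y m (inord 1) = - (p m (inord 1) * a m),
     Y m (inord 2) = p m (inord 2) * a m & Y m (inord 3) = p m (inord 3) * a m].
  move=> m.
  have H : qrow Y m = qmul (0, 1, 0, 0) (qmul (qrow p m) (0, a m, 0, 0)).
    by rewrite /Y /I1 qrow_mkH /Afield qrow_mkH.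
  have e0 : Y m (inord 0) = (qrow Y m).1.1.1 by [].
  have e1 : Y m (inord 1) = (qrow Y m).1.1.2 by [].
  have e2 : Y m (inord 2) = (qrow Y m).1.2 by [].
  have e3 : Y m (inord 3) = (qrow Y m).2 by [].
  rewrite e0 e1 e2 e3 H /=; split; ring.
have E : forall t, mu1 Bs (p + t *: Y) a' = t * Bs L a' + (t ^+ 2 * Bs Q a' + Bs N a').
  move=> t; rewrite /mu1.
  have -> : (fun m => nu1 (qrow (p + t *: Y) m)) = (fun m => t * L m + (t ^+ 2 * Q m + N m)).
    apply/funext => m.
    have Pc : forall j, (p + t *: Y) m j = p m j + t * Y m j by move=> j; rewrite !mxE.
    rewrite /L /Q /N /xq /qrow !Pc /=.
    have [e0 e1 e2 e3] := Yc m; rewrite e0 e1 e2 e3 /nu1; ring.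
  by rewrite (Bs_lin _ _ _ HB ga) (Bs_lin _ _ _ HB ga).
rewrite /I1d /dirder -/Y.
under eq_fun do rewrite E.
exact: dpoly.
Qed.
Definition ext1 {R : ringType} {k : nat} (f : 'I_k.+1 -> R) (n : nat) : R :=
  if (n < k.+1)%N then f (inord n) else - f (inord 0).

Lemma ext1_lt {R : ringType} {k : nat} (f : 'I_k.+1 -> R) n :
  (n < k.+1)%N -> ext1 f n = f (inord n).
Proof. by rewrite /ext1 => ->. Qed.

Lemma ext1_K {R : ringType} {k : nat} (f : 'I_k.+1 -> R) : ext1 f k.+1 = - ext1 f 0.
Proof. by rewrite /ext1 ltnn ltn0Sn. Qed.

Lemma sorted_consec (R : realFieldType) (K : nat) (U1 U2 : nat -> R) :
  0 <= U2 0 -> (forall n, (0 < n)%N -> (n < K)%N -> 0 < U2 n) ->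
  (forall n, (n.+1 < K)%N -> 0 < U1 n * U2 n.+1 - U2 n * U1 n.+1) ->
  forall i j, (i < j)%N -> (j < K)%N -> 0 < U1 i * U2 j - U2 i * U1 j.
Proof.
move=> y0 ypos cons i j ij; elim: j ij => [//|j IH] ij jK.
have [E|ne] := eqVneq i j.
  by subst j; apply: cons.
have ij' : (i < j)%N by clia.
have h1 := IH ij' ltac:(clia).
have h2 := cons j jK.
have yj := ypos j ltac:(clia) ltac:(clia).
have yj1 := ypos j.+1 ltac:(clia) jK.
have yi : 0 <= U2 i by have [->|ip] := eqVneq i 0%N; [done | apply/ltW/ypos; clia].
have Pl : (U1 i * U2 j.+1 - U2 i * U1 j.+1) * U2 j =
   (U1 i * U2 j - U2 i * U1 j) * U2 j.+1 + (U1 j * U2 j.+1 - U2 j * U1 j.+1) * U2 i by ring.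
have : 0 < (U1 i * U2 j - U2 i * U1 j) * U2 j.+1 + (U1 j * U2 j.+1 - U2 j * U1 j.+1) * U2 i.
  apply: ltr_pwDl; first exact: mulr_gt0.
  by apply: mulr_ge0 => //; exact: ltW.
by rewrite -Pl pmulr_lgt0.
Qed.

Lemma u_sorted {R : realType} {k : nat} (u : 'I_k.+1 -> int * int) :
  upper_half u -> first_horizontal u -> convex_seq u ->
  let U1 := ext1 (fun i => ((u i).1)%:~R : R) in
  let U2 := ext1 (fun i => ((u i).2)%:~R : R) in
  forall i j, (i < j)%N -> (j <= k.+1)%N -> ~~ ((i == 0%N) && (j == k.+1)) ->
    0 < U1 i * U2 j - U2 i * U1 j.
Proof.
move=> Hup Hfirst Hconv U1 U2.
have [f2 f1] := Hfirst (inord 0) (inordK (ltn0Sn k)).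
have u20 : U2 0 = 0 by rewrite /U2 ext1_lt // f2.
have u10 : 0 < U1 0 by rewrite /U1 ext1_lt // ltr0z.
have dcast : forall i j : 'I_k.+1, ((det2 (u i) (u j))%:~R : R) =
    ((u i).1)%:~R * ((u j).2)%:~R - ((u i).2)%:~R * ((u j).1)%:~R.
  by move=> i j; rewrite /det2 rmorphB !rmorphM.
have cons : forall n, (n.+1 < k.+1)%N -> 0 < U1 n * U2 n.+1 - U2 n * U1 n.+1.
  move=> n nk; rewrite /U1 /U2 !ext1_lt; try clia.
  rewrite -dcast ltr0z; apply: Hconv; rewrite !inordK //; clia.
have y_ge : forall n, (n < k.+1)%N -> 0 <= U2 n.
  move=> n nk; rewrite /U2 ext1_lt // ler0z.
  by case: (Hup (inord n)) => [[/eqP -> _] | /ltW].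
have ypos : forall n, (0 < n)%N -> (n < k.+1)%N -> 0 < U2 n.
  move=> n n0 nk; rewrite /U2 ext1_lt // ltr0z.
  case: (Hup (inord n)) => [[/eqP e2 e1] | //].
  have c := Hconv (inord n.-1) (inord n) ltac:(rewrite !inordK; clia).
  have yprev := y_ge n.-1 ltac:(clia).
  rewrite /U2 ext1_lt in yprev; last by clia.
  move: c; rewrite -(ltr0z R) (dcast (inord n.-1) (inord n)) e2 mulr0z mulr0 add0r => c.
  exfalso; move: c; rewrite oppr_gt0 ltNge mulr_ge0 //.
  by rewrite ler0z ltW.
have S := @sorted_consec R k.+1 U1 U2 (y_ge 0%N isT) ypos cons.
move=> i j ij jk nij.
have [jK|jK] := eqVneq j k.+1.
  subst j.
  have i0 : (0 < i)%N by move: nij; rewrite eqxx andbT; clia.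
  rewrite {1 2}/U1 {1 2}/U2 !ext1_K -/U1 -/U2.
  have := S 0%N i i0 ij; rewrite u20; lra.
apply: S => //; clia.
Qed.

Lemma w_sorted {R : realType} {k : nat} (theta : 'I_k.+1 -> R) :
  conformal_angles theta ->
  let W1 := ext1 (fun i => cos (theta i / 2)) in
  let W2 := ext1 (fun i => sin (theta i / 2)) in
  forall i j, (i < j)%N -> (j <= k.+1)%N -> ~~ ((i == 0%N) && (j == k.+1)) ->
    0 < W1 i * W2 j - W2 i * W1 j.
Proof.
move=> [H0 [Hinc Hrng]] W1 W2 i j ij jk nij.
have t0 : theta (inord 0) = 0 by apply: H0; rewrite inordK.
have [jK|jK] := eqVneq j k.+1.
  subst j.
  have i0 : (0 < i)%N by move: nij; rewrite eqxx andbT; clia.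
  rewrite /W1 /W2 !ext1_K !ext1_lt; try clia.
  rewrite t0 mul0r sin0 cos0.
  have lt := Hinc (inord 0) (inord i) ltac:(rewrite !inordK; clia).
  have := Hrng (inord i) => /andP[_ h2].
  rewrite t0 in lt.
  have -> : cos (theta (inord i) / 2) * - 0 - sin (theta (inord i) / 2) * - 1 =
     sin (theta (inord i) / 2) by ring.
  apply: sin_gt0_pi; apply/andP; split; lra.
rewrite /W1 /W2 !ext1_lt; try clia.
have lt := Hinc (inord i) (inord j) ltac:(rewrite !inordK; clia).
have := Hrng (inord i) => /andP[g1 _].
have := Hrng (inord j) => /andP[_ g2].
have -> : cos (theta (inord i) / 2) * sin (theta (inord j) / 2) -
    sin (theta (inord i) / 2) * cos (theta (inord j) / 2) =
    sin (theta (inord j) / 2 - theta (inord i) / 2) by rewrite sinB; ring.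
apply: sin_gt0_pi; apply/andP; split; lra.
Qed.
Lemma sum_rearr (R : comRingType) (k : nat) (A U : nat -> R) :
  A k.+1 = - A 0 ->
  \sum_(0 <= n < k.+1) A n * (if n == 0%N then U 0%N + U k else U n - U n.-1) =
  \sum_(0 <= n < k.+1) (A n - A n.+1) * U n.
Proof.
move=> Ak.
rewrite big_nat_recl //=.
rewrite [in LHS](eq_bigr (fun n => A n.+1 * U n.+1 - A n.+1 * U n)); last first.
  by move=> n _ /=; ring.
rewrite sumrB.
rewrite [in RHS](eq_bigr (fun n => A n * U n - A n.+1 * U n)); last by move=> n _; ring.
rewrite sumrB big_nat_recl // [X in _ = _ - X]big_nat_recr //= Ak.
ring.
Qed.

Lemma ord_pred_inord (k n : nat) : (n < k.+1)%N ->
  ord_pred (inord n : 'I_k.+1) = inord (if n == 0%N then k else n.-1).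
Proof.
move=> nk; apply: val_inj => /=; rewrite inordK //.
case: n nk => [|n] nk /=.
  by rewrite inordK // ?add0n /= ?modn_small.
rewrite inordK; last by clia.
by rewrite ?addSn /= ?modnDr ?modn_small //; clia.
Qed.

Lemma sum_ord_nat (R : zmodType) (k : nat) (F : 'I_k.+1 -> R) :
  \sum_(i < k.+1) F i = \sum_(0 <= n < k.+1) F (inord n).
Proof.
rewrite big_mkord; apply: eq_bigr => i _; by rewrite inord_val.
Qed.

Lemma g_sum {R : realType} {k : nat} (u : 'I_k.+1 -> int * int) (a : 'I_k.+1 -> R) :
  in_g u a ->
  \sum_(0 <= n < k.+1) (ext1 a n - ext1 a n.+1) * ext1 (fun i => ((u i).1)%:~R : R) n = 0 /\
  \sum_(0 <= n < k.+1) (ext1 a n - ext1 a n.+1) * ext1 (fun i => ((u i).2)%:~R : R) n = 0.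
Proof.
move=> [g1 g2].
have key : forall (c : int * int -> int),
   (forall x y : int * int, c ((x.1 + y.1, x.2 + y.2)) = c x + c y) ->
   (forall x y : int * int, c ((x.1 - y.1, x.2 - y.2)) = c x - c y) ->
   \sum_(i < k.+1) a i * ((c (vvec u i))%:~R : R) =
   \sum_(0 <= n < k.+1) (ext1 a n - ext1 a n.+1) * ext1 (fun i => ((c (u i))%:~R : R)) n.
  move=> c cD cB.
  rewrite sum_ord_nat -sum_rearr; last by rewrite ext1_K.
  apply: eq_big_nat => n /andP[_ nk].
  rewrite /vvec inordK // ord_pred_inord // !ext1_lt //; last by clia.
  case: n nk => [|n] nk /=.
    by rewrite cD rmorphD.
  by rewrite cB rmorphB.
split.
  rewrite -(key (fun x => x.1)) //; by move=> [? ?] [? ?].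
rewrite -(key (fun x => x.2)) //; by move=> [? ?] [? ?].
Qed.
Lemma xq_sq {R : realType} {k : nat} (p : Hk R k) (m : 'I_k) :
  xq p m ^+ 2 = nu1 (qrow p m) ^+ 2 + nu2 (qrow p m) ^+ 2 + nu3 (qrow p m) ^+ 2.
Proof. by rewrite /xq /qrow /nu1 /nu2 /nu3; ring. Qed.

Lemma xq_ge0 {R : realType} {k : nat} (p : Hk R k) (m : 'I_k) : 0 <= xq p m.
Proof.
rewrite /xq; have := sqr_ge0 (p m (inord 0)); have := sqr_ge0 (p m (inord 1)).
have := sqr_ge0 (p m (inord 2)); have := sqr_ge0 (p m (inord 3)); lra.
Qed.

Lemma xq0 {R : realType} {k : nat} (p : Hk R k) (m : 'I_k) :
  xq p m = 0 -> forall c, p m c = 0.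
Proof.
rewrite /xq => h c.
have s0 := sqr_ge0 (p m (inord 0)); have s1 := sqr_ge0 (p m (inord 1)).
have s2 := sqr_ge0 (p m (inord 2)); have s3 := sqr_ge0 (p m (inord 3)).
have z : forall j, (j < 4)%N -> p m (inord j) ^+ 2 = 0.
  move=> j; case: j => [|[|[|[|j]]]] // _; lra.
have := z (val c) (ltn_ord c); rewrite inord_val => /eqP.
by rewrite sqrf_eq0 => /eqP.
Qed.

Theorem mainTheorem4 (R : realType) (k : nat) (u : 'I_k -> int * int)
  (theta : 'I_k -> R) (Bs : ('I_k -> R) -> ('I_k -> R) -> R) :
  generates_lattice u ->
  cyc_consec_indep u ->
  upper_half u ->
  first_horizontal u ->
  convex_seq u ->
  conformal_angles theta ->
  Bstar_ok u theta Bs ->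
  forall p : Hk R k, in_P u Bs p ->
  forall a : 'I_k -> R, in_g u a -> a <> (fun _ => 0) ->
  exists a' : 'I_k -> R, in_g u a' /\
    I1d (fun q => mu1 Bs q a') p (Afield p a) <> 0.
Proof.
destruct k as [|k].
  move=> _ _ _ _ _ _ _ p _ a _ anz; exfalso; apply: anz; apply/funext => -[].
  by [].
move=> Hgen Hcyc Hup Hfirst Hconv Hang HB p [pnz Pmu] a ga anz.
case: (pselect (exists a', in_g u a' /\ I1d (fun q => mu1 Bs q a') p (Afield p a) <> 0)) => // Hno.
exfalso.
have Hall : forall a', in_g u a' -> Bs (fun m => -2 * (a m * xq p m)) a' = 0.
  move=> a' ga'; rewrite -(I1d_val _ _ _ _ _ _ HB ga').
  case: (pselect (I1d (fun q => mu1 Bs q a') p (Afield p a) = 0)) => // ne.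
  by exfalso; apply: Hno; exists a'.
have [_ [_ Hker]] := HB.
have [f1 [f2 Hf]] := (Hker _).1 Hall.
have [a1 [b1 H1]] := (Hker (fun m => nu1 (qrow p m))).1 (fun a' ga' => (Pmu a' ga').1).
have [a2 [b2 H2]] := (Hker (fun m => nu2 (qrow p m))).1 (fun a' ga' => (Pmu a' ga').2.1).
have [a3 [b3 H3]] := (Hker (fun m => nu3 (qrow p m))).1 (fun a' ga' => (Pmu a' ga').2.2).
pose U1 := ext1 (fun i => ((u i).1)%:~R : R).
pose U2 := ext1 (fun i => ((u i).2)%:~R : R).
pose W1 := ext1 (fun i => cos (theta i / 2)).
pose W2 := ext1 (fun i => sin (theta i / 2)).
pose AA := ext1 a.
pose XX n := if (n < k.+1)%N then xq p (inord n) else xq p (inord 0).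
pose G11 := a1 ^+ 2 + a2 ^+ 2 + a3 ^+ 2.
pose G12 := a1 * b1 + a2 * b2 + a3 * b3.
pose G22 := b1 ^+ 2 + b2 ^+ 2 + b3 ^+ 2.
have [Hf2 Hf1] := Hfirst (inord 0) (inordK (ltn0Sn k)).
have u10 : 0 < U1 0 by rewrite /U1 ext1_lt // ltr0z.
have u20 : U2 0 = 0 by rewrite /U2 ext1_lt // Hf2.
have XK : XX k.+1 = xq p (inord 0) by rewrite /XX ltnn.
have Xl : forall n, (n < k.+1)%N -> XX n = xq p (inord n) by move=> n nk; rewrite /XX nk.
have Xg : forall m : 'I_k.+1, xq p m ^+ 2 =
    G11 * cos (theta m / 2) ^+ 2 + 2 * G12 * cos (theta m / 2) * sin (theta m / 2) +
    G22 * sin (theta m / 2) ^+ 2.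
  by move=> m; rewrite xq_sq H1 H2 H3 /G11 /G12 /G22; ring.
have HX : forall n, (n <= k.+1)%N -> 0 <= XX n /\
    XX n ^+ 2 = G11 * W1 n ^+ 2 + 2 * G12 * W1 n * W2 n + G22 * W2 n ^+ 2.
  move=> n nk; rewrite /W1 /W2.
  case: (ltnP n k.+1) => nK.
    by rewrite Xl // !ext1_lt //; split; [exact: xq_ge0 | exact: Xg].
  have -> : n = k.+1 by apply/eqP; rewrite eqn_leq nk nK.
  rewrite XK !ext1_K !ext1_lt //; split; first exact: xq_ge0.
  by rewrite Xg; ring.
have Am : forall m : 'I_k.+1, a m * xq p m = (- f1 / 2) * cos (theta m / 2) + (- f2 / 2) * sin (theta m / 2).
  by move=> m; have := Hf m => /= h; rewrite -[a m * xq p m]mul1r; lra.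
have Ha : forall n, (n <= k.+1)%N -> AA n * XX n = (- f1 / 2) * W1 n + (- f2 / 2) * W2 n.
  move=> n nk; rewrite /W1 /W2 /AA.
  case: (ltnP n k.+1) => nK.
    by rewrite Xl // !ext1_lt //; exact: Am.
  have -> : n = k.+1 by apply/eqP; rewrite eqn_leq nk nK.
  rewrite XK !ext1_K !ext1_lt //.
  have := Am (inord 0); lra.
have G11p : 0 <= G11.
  by rewrite /G11; have := sqr_ge0 a1; have := sqr_ge0 a2; have := sqr_ge0 a3; lra.
have G22p : 0 <= G22.
  by rewrite /G22; have := sqr_ge0 b1; have := sqr_ge0 b2; have := sqr_ge0 b3; lra.
have GD : G12 ^+ 2 <= G11 * G22.
  have E : G11 * G22 - G12 ^+ 2 = (a1 * b2 - a2 * b1) ^+ 2 + (a1 * b3 - a3 * b1) ^+ 2 +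
     (a2 * b3 - a3 * b2) ^+ 2 by rewrite /G11 /G12 /G22; ring.
  have := sqr_ge0 (a1 * b2 - a2 * b1); have := sqr_ge0 (a1 * b3 - a3 * b1).
  have := sqr_ge0 (a2 * b3 - a3 * b2); lra.
have Hnz : exists n, (n < k.+1)%N /\ XX n != 0.
  case: (pselect (exists n, (n < k.+1)%N /\ XX n != 0)) => // H.
  exfalso; move/eqP: pnz; apply; apply/matrixP => m c; rewrite mxE.
  apply: (xq0 p m); apply/eqP/negPn/negP => ne; apply: H.
  exists (val m); split; first exact: ltn_ord.
  have e := Xl (val m) (ltn_ord m); rewrite inord_val in e.
  by rewrite e.
have [S1 S2] := g_sum _ _ ga.
have Z := @core R k.+1 U1 U2 W1 W2 AA XX G11 G12 G22 (- f1 / 2) (- f2 / 2)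
  (ltn0Sn k) u10 u20 (ext1_K _) (ext1_K _) (u_sorted _ Hup Hfirst Hconv)
  (ext1_K _) (ext1_K _) (w_sorted _ Hang) HX G11p G22p GD Hnz Ha (ext1_K _) S1 S2.
apply: anz; apply/funext => i.
by have := Z (nat_of_ord i) (ltn_ord i); rewrite /AA ext1_lt // inord_val.
Qed.
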